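(* Let $m$ be a positive integer, $x$ a positive integer and $r\in\{0,\dots,m-1\}$. Define $y_0=(m+1)x+r$ and $y_n=\left\lfloor \frac{(m+1)y_{n-1}}{m}\right\rfloor$ for $n\ge1$. Then for every integer $n\ge 0$, $\left\lfloor \frac{y_n}{m+1}\right\rfloor = x_n(x,r)$ and $y_n\equiv r_n(x,r)\pmod{m+1}$; that is, $x_n(x,r)$ and $r_n(x,r)$ are the quotient and remainder of $y_n$ upon division by $m+1$.
   Context: Fix a positive integer $m$. The triangle $T_m$ is an array whose row $x$ ($x=1,2,\dots$) has $x$ entries, in columns $0,\dots,x-1$. Row $1$ is the single entry $1$. For $x>1$, row $x$ is obtained from row $x-1$ by rotating it cyclically left by $m$ positions (the entry in column $c$ of row $x-1$ moves to column $(c-m)\bmod(x-1)\in\{0,\dots,x-2\}$ of row $x$), then appending in column $x-1$ a new entry equal to $1$ plus the entry in column $0$ of row $x-1$. Entries are individual objects keeping their identity as they move. Tracking: for a positive integer $x$ and $r\in\{0,\dots,m-1\}$, follow the individual entry in row $x$, column $r\bmod x$. Let $(x_0,r_0),(x_1,r_1),\dots$ be the list, in strictly increasing lexicographic order, of all integer pairs $(y,c)$ with $y\ge x$, $0\le c\le m-1$, $(y,c)\ge (x,r)$ lexicographically, such that the tracked entry occupies column $c\bmod y$ of row $y$ (so $x_0=x$, $r_0=r$). Write $x_n(x,r)=x_n$, $r_n(x,r)=r_n$. *)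

(* Defs.v *)
From mathcomp Require Import all_boot all_order all_algebra.
Set Implicit Arguments. Unset Strict Implicit. Unset Printing Implicit Defensive.

(* Column (in row x + k) of the entry of T_m that sits in row x, column r mod x.
   Row z has z entries; passing from row z to row z+1 the entry in column c
   moves to column (c - m) mod z (the appended entry is new, so a tracked
   entry is never removed). *)
Fixpoint track_col (m x r k : nat) : nat :=
  match k with
  | 0 => r %% x
  | k'.+1 =>
      let c := track_col m x r k' in
      let z := x + k' in
      `|((c%:Z - m%:Z) %% z%:Z)%Z|%N
  end.

Definition tracked (m x r y c : nat) : bool :=
  [&& x <= y, c < m, ((x < y) || ((x == y) && (r <= c)))
    & track_col m x r (y - x) == c %% y].

Definition lexlt (y' c' y c : nat) : bool := (y' < y) || ((y' == y) && (c' < c)).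

Definition n_before (m x r y c : nat) : nat :=
  \sum_(x <= y' < y.+1) \sum_(c' < m) (tracked m x r y' c' && lexlt y' c' y c).

(* (y, c) = (x_n(x,r), r_n(x,r)): the element of the list (listed in strictly
   increasing lexicographic order) with exactly n predecessors. *)
Definition is_nth_tracked (m x r n y c : nat) : Prop :=
  tracked m x r y c /\ n_before m x r y c = n.

Fixpoint yseq (m x r n : nat) : nat :=
  match n with
  | 0 => (m + 1) * x + r
  | n'.+1 => ((m + 1) * yseq m x r n') %/ m
  end.

(* Main.v *)
Require Import Defs.
From mathcomp Require Import all_boot all_order all_algebra.
From mathcomp Require Import zify.

Lemma modz_lem (a m z t : nat) (q : int) :
  (a%:Z - m%:Z = t%:Z + q * z%:Z)%R -> t < z ->
  `|((a%:Z - m%:Z) %% z%:Z)%Z|%N = t.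
Proof.
move=> -> htz.
rewrite GRing.addrC modzMDl modz_small //.

Qed.

Lemma tc_S m x r k :
  track_col m x r k.+1 = `|(((track_col m x r k)%:Z - m%:Z) %% (x + k)%:Z)%Z|%N.
Proof. by []. Qed.

Lemma tc_far m x r y c j : 0 < y -> x <= y -> c < m ->
  track_col m x r (y - x) = c %% y -> 0 < j -> j * m <= c + y ->
  track_col m x r (y + j - x) = c + y - j * m.
Proof.
move=> y0 xy cm hc.
elim: j => [//|j IH] _ hj.
have -> : y + j.+1 - x = (y + j - x).+1 by lia.
rewrite tc_S.
have -> : x + (y + j - x) = y + j by lia.
case: j IH hj => [|j] IH hj.
- rewrite addn0 hc.
  apply: (@modz_lem _ _ _ _ (- ((c %/ y)%:Z + 1))%R); last by lia.
  have e := divn_eq c y.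
  move: (c %/ y) (c %% y) e => q rr e.
  nia.
- rewrite IH //; last by lia.
  apply: (@modz_lem _ _ _ _ (0%R)); last by lia.
  rewrite GRing.mul0r GRing.addr0; lia.
Qed.

Definition Rw m x r y := \sum_(0 <= c' < m) tracked m x r y c'.
Definition Sm m x r y c :=
  \sum_(x <= y' < y) Rw m x r y' + \sum_(0 <= c' < c) tracked m x r y c'.

Lemma nbS m x r y c : x <= y -> c <= m -> n_before m x r y c = Sm m x r y c.
Proof.
move=> xy cm.
rewrite /n_before /Sm big_nat_recr //=.
congr (_ + _).
- apply: eq_big_nat => y' /andP[_ hy'].
  rewrite /Rw big_mkord; apply: eq_bigr => c' _.
  by rewrite /lexlt hy' andbT.
- rewrite -(big_mkord xpredT (fun c0 => (tracked m x r y c0 && lexlt y c0 y c) : nat)) (@big_cat_nat _ _ _ c 0 m _ _ (leq0n c) cm) /=.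
  rewrite [X in _ + X]big_nat_cond [X in _ + X]big1 ?addn0; last first.
    move=> i /andP[/andP[hi _] _]; by rewrite /lexlt ltnn eqxx /= ltnNge hi andbF.
  rewrite big_nat_cond [RHS]big_nat_cond; apply: eq_bigr => i /andP[/andP[_ hi] _].
  by rewrite /lexlt ltnn eqxx hi /= andbT.
Qed.

Lemma trk_col m x r y c : tracked m x r y c -> track_col m x r (y - x) = c %% y.
Proof. by case/and4P => _ _ _ /eqP. Qed.
Lemma trk_lt m x r y c : tracked m x r y c -> c < m.
Proof. by case/and4P. Qed.
Lemma trk_le m x r y c : tracked m x r y c -> x <= y.
Proof. by case/and4P. Qed.

Lemma same_res m x r y c i : tracked m x r y c -> tracked m x r y i ->
  c <= i -> i < c + y -> i = c.
Proof.
move=> /trk_col h1 /trk_col h2 ci hi.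
have e : i %% y = c %% y by rewrite -h1 -h2.
have : y %| i - c by rewrite -eqn_mod_dvd // e.
case: (i - c =P 0) => [|nz]; first by lia.
move/dvdn_leq => h; have := h (ltac:(lia)); lia.
Qed.

Lemma row_one m x r y c e : tracked m x r y c -> c < e -> e <= c + y ->
  \sum_(c <= i < e) tracked m x r y i = 1.
Proof.
move=> hc ce ey.
rewrite big_ltn // hc big_nat_cond big1 // => i /andP[/andP[h1 h2] _].
apply/eqP; rewrite eqb0; apply/negP => hi.
have := @same_res m x r y c i hc hi (ltnW h1) (ltac:(lia)); lia.
Qed.

Lemma step m x r y c : 0 < x -> tracked m x r y c ->
  tracked m x r (y + (c + y) %/ m) ((c + y) %% m) /\
  Sm m x r (y + (c + y) %/ m) ((c + y) %% m) = (Sm m x r y c).+1.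
Proof.
move=> x0 hc.
have cm := @trk_lt m x r y c hc; have xy := @trk_le m x r y c hc; have hcol := @trk_col m x r y c hc.
have m0 : 0 < m by lia.
have y0 : 0 < y by lia.
have e := divn_eq (c + y) m.
have hmod := ltn_pmod (c + y) m0.
case: (posnP ((c + y) %/ m)) => [k0|kpos].
- have ecy : (c + y) %% m = c + y by rewrite e k0 mul0n add0n modn_mod.
  rewrite k0 addn0 ecy; split.
  + move: hc; rewrite /tracked => /and4P[h1 h2 h3 h4]; apply/and4P; split => //.
    * by rewrite -ecy.
    * by case/orP: h3 => [->//|/andP[-> h]]; rewrite orbC /= (leq_trans h) // leq_addr.
    * by rewrite modnDr; apply/eqP.
  + rewrite /Sm -addnS; congr (_ + _).
    rewrite (@big_cat_nat _ _ _ c 0 (c + y)) //=; last by lia.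
    rewrite (@row_one m x r y c) ?addn1 //; first lia.
- set k := (c + y) %/ m in e kpos *; set c' := (c + y) %% m in e hmod *.
  have kmle : k * m <= c + y by lia.
  have ec' : c' = c + y - k * m by lia.
  have tk := @tc_far m x r y c k y0 xy cm hcol kpos kmle.
  have c'lt : c' < y + k by nia.
  split.
  + apply/and4P; split => //; first by lia.
      by rewrite (_ : x < y + k) //; lia.
    by rewrite modn_small // tk ec'.
  + rewrite /Sm.
    rewrite [X in _ + X]big_nat_cond [X in _ + X]big1 ?addn0; last first.
      move=> i /andP[/andP[_ hi] _]; apply/eqP; rewrite eqb0; apply/negP => ht.
      have := @trk_col m x r _ _ ht; rewrite tk modn_small; lia.
    rewrite (@big_cat_nat _ _ _ y x (y + k)) //=; last by lia.
    rewrite (@big_ltn _ _ _ y (y + k)); last by lia.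
    rewrite [X in _ + (_ + X)]big_nat_cond [X in _ + (_ + X)]big1 ?addn0; last first.
      move=> y' /andP[/andP[h1 h2] _].
      rewrite /Rw big_nat_cond big1 // => i /andP[/andP[_ hi] _].
      apply/eqP; rewrite eqb0; apply/negP => ht.
      have := @trk_col m x r _ _ ht.
      have hj1 : (y' - y).+1 * m <= k * m by rewrite leq_mul2r; lia.
      rewrite mulSn in hj1.
      have -> : y' = y + (y' - y) by lia.
      rewrite (@tc_far m x r y c (y' - y)) //; try lia.
      have := leq_mod i (y + (y' - y)). lia.
    rewrite [Rw m x r y]/Rw (@big_cat_nat _ _ _ c 0 m) //=; last by lia.
    have mk : m <= k * m by rewrite leq_pmull.
    rewrite (@row_one m x r y c m) //; last by lia.
    lia.
Qed.

Lemma enc m y c : 0 < m ->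
  ((m + 1) * ((m + 1) * y + c)) %/ m = (m + 1) * (y + (c + y) %/ m) + (c + y) %% m.
Proof.
move=> m0.
have -> : (m + 1) * ((m + 1) * y + c) = ((m + 1) * y + c + y) * m + (c + y) by nia.
rewrite divnMDl //.
have e := divn_eq (c + y) m.
move: ((c + y) %/ m) ((c + y) %% m) e => q rr e.
nia.
Qed.

Lemma dec_div m y c : c < m + 1 -> ((m + 1) * y + c) %/ (m + 1) = y.
Proof. move=> h; rewrite mulnC divnMDl; last by rewrite addn1. by rewrite divn_small // addn0. Qed.
Lemma dec_mod m y c : c < m + 1 -> ((m + 1) * y + c) %% (m + 1) = c.
Proof. by move=> h; rewrite mulnC modnMDl modn_small. Qed.

Theorem mainTheorem5 (m x r : nat) :
  0 < m -> 0 < x -> r < m ->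
  forall n : nat,
    is_nth_tracked m x r n (yseq m x r n %/ (m + 1)) (yseq m x r n %% (m + 1)).
Proof.
move=> m0 x0 rm n.
have inv : exists y c, yseq m x r n = (m + 1) * y + c /\ tracked m x r y c /\
    Sm m x r y c = n.
  elim: n => [|n [y [c [ey [hc hs]]]]].
  - exists x, r; split => //; split.
      by rewrite /tracked leqnn rm leqnn eqxx orbT subnn /=.
    rewrite /Sm big_geq // add0n big_nat_cond big1 // => i /andP[/andP[_ hi] _].
    by rewrite /tracked ltnn eqxx /= (leqNgt r i) hi /= !andbF.
  - have [t1 t2] := @step m x r y c x0 hc.
    exists (y + (c + y) %/ m), ((c + y) %% m); split; last by rewrite t2 hs.
    by rewrite /= ey enc.
have [y [c [ey [hc hs]]]] := inv.
have cm := @trk_lt m x r y c hc.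
rewrite ey dec_div ?dec_mod; try lia.
split => //.
rewrite nbS //; [exact: (@trk_le m x r y c hc) | lia].
Qed.
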